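(* Let $S$ be an affine semigroup and let $F$ be a face of $\mathrm{pos}(S)$ that is the intersection of $k$ facets $F_1=\mathrm{pos}(S)\cap H_1,\ldots,F_k=\mathrm{pos}(S)\cap H_k$, and let $\sigma_i$ be the primitive linear form associated with $H_i$ ($i=1,\ldots,k$). Suppose that (1) there exist $\gamma_1,\ldots,\gamma_k\in S$ such that $\sigma_i(\gamma_j)=\delta_{ij}$ for all $1\le i,j\le k$; and (2) $\mathrm{grp}(S\cap F)=\mathrm{grp}(S)\cap H_1\cap\cdots\cap H_k$. Then $S_F/U(S_F)$ is a free commutative monoid with basis the images of $\gamma_1,\ldots,\gamma_k$.
   Context: An affine semigroup is a finitely generated submonoid $S$ of $\mathbb{Z}^n$ (containing $0$) with $\mathrm{grp}(S)=\mathbb{Z}^n$. $\mathrm{pos}(S)$ is the set of nonnegative real linear combinations of elements of $S$; a face is its intersection with a supporting hyperplane, a facet is a face of codimension one. Each facet has the form $\mathrm{pos}(S)\cap H$ with $H=\{\sigma=0\}$, $\sigma$ a primitive linear form (relatively prime integer coefficients) with $\sigma\ge0$ on $\mathrm{pos}(S)$, the primitive linear form associated with $H$. $S_F=\{\alpha-\beta:\alpha\in S,\beta\in S\cap F\}$ and $U(S_F)=\mathrm{grp}(S\cap F)$ is its group of units. *)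

(* Defs.v *)
From HB Require Import structures.
From mathcomp Require Import all_boot all_order all_algebra.
Set Implicit Arguments. Unset Strict Implicit. Unset Printing Implicit Defensive.
Import Order.TTheory GRing.Theory Num.Theory.
Local Open Scope ring_scope.

(* Z^n is modelled as 'rV[int]_n, R^n as 'rV[R]_n for an ordered field R. *)

Definition inS (n : nat) (gens : seq 'rV[int]_n) (x : 'rV[int]_n) : Prop :=
  exists c : 'I_(size gens) -> nat, x = \sum_(i < size gens) gens`_i *+ c i.

Definition inGrp (n : nat) (P : 'rV[int]_n -> Prop) (x : 'rV[int]_n) : Prop :=
  exists (s : seq 'rV[int]_n) (c : 'I_(size s) -> int),
    (forall i : 'I_(size s), P s`_i) /\ x = \sum_(i < size s) s`_i *~ c i.

Definition affine (n : nat) (gens : seq 'rV[int]_n) : Prop :=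
  forall x : 'rV[int]_n, inGrp (inS gens) x.

Definition embR (R : realFieldType) (n : nat) (x : 'rV[int]_n) : 'rV[R]_n :=
  map_mx (fun z : int => z%:~R) x.

(* pos(S): nonnegative (R-)linear combinations of elements of S
   (equivalently of the generators). *)
Definition inPos (R : realFieldType) (n : nat) (gens : seq 'rV[int]_n)
    (x : 'rV[R]_n) : Prop :=
  exists c : 'I_(size gens) -> R,
    (forall i, 0 <= c i) /\ x = \sum_(i < size gens) c i *: embR R gens`_i.

Definition lformZ (n : nat) (sigma x : 'rV[int]_n) : int :=
  \sum_(i < n) sigma 0 i * x 0 i.
Definition lformR (R : realFieldType) (n : nat) (sigma : 'rV[int]_n)
    (x : 'rV[R]_n) : R :=
  \sum_(i < n) (sigma 0 i)%:~R * x 0 i.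

Definition primitive (n : nat) (sigma : 'rV[int]_n) : Prop :=
  \big[gcdz/0]_(i < n) sigma 0 i = 1.

Definition set_dim (R : realFieldType) (n : nat) (P : 'rV[R]_n -> Prop)
    (d : nat) : Prop :=
  (exists s : seq 'rV[R]_n, (forall x, x \in s -> P x) /\ \dim <<s>>%VS = d) /\
  (forall s : seq 'rV[R]_n, (forall x, x \in s -> P x) -> (\dim <<s>>%VS <= d)%N).

(* sigma is the primitive linear form associated with a hyperplane
   H = {sigma = 0} such that pos(S) ∩ H is a facet of pos(S):
   sigma primitive, sigma >= 0 on pos(S) (H supporting), and pos(S) ∩ H has
   codimension one in pos(S) (whose dimension is n, since grp(S) = Z^n). *)
Definition facet_form (R : realFieldType) (n : nat) (gens : seq 'rV[int]_n)
    (sigma : 'rV[int]_n) : Prop :=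
  [/\ primitive sigma,
      (forall x : 'rV[R]_n, inPos gens x -> 0 <= lformR sigma x) &
      set_dim (fun x : 'rV[R]_n => inPos gens x /\ lformR sigma x = 0) n.-1].

Definition inFace (R : realFieldType) (n k : nat) (gens : seq 'rV[int]_n)
    (sigma : 'I_k -> 'rV[int]_n) (x : 'rV[R]_n) : Prop :=
  inPos gens x /\ forall i, lformR (sigma i) x = 0.

Definition inSF (R : realFieldType) (n k : nat) (gens : seq 'rV[int]_n)
    (sigma : 'I_k -> 'rV[int]_n) (x : 'rV[int]_n) : Prop :=
  inS gens x /\ inFace gens sigma (embR R x).

Definition inS_F (R : realFieldType) (n k : nat) (gens : seq 'rV[int]_n)
    (sigma : 'I_k -> 'rV[int]_n) (x : 'rV[int]_n) : Prop :=
  exists a b, inS gens a /\ inSF R gens sigma b /\ x = a - b.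

(* U(S_F) = grp(S ∩ F). *)
Definition inU (R : realFieldType) (n k : nat) (gens : seq 'rV[int]_n)
    (sigma : 'I_k -> 'rV[int]_n) (x : 'rV[int]_n) : Prop :=
  inGrp (inSF R gens sigma) x.

Definition comb (n k : nat) (gamma : 'I_k -> 'rV[int]_n) (c : 'I_k -> nat)
  : 'rV[int]_n := \sum_(j < k) gamma j *+ c j.

(* S_F / U(S_F) is a free commutative monoid with basis the images of the
   gamma_j: the monoid map N^k -> S_F/U(S_F), c |-> [sum c_j gamma_j], is
   bijective (gamma_j in S_F is assumed separately). *)
Definition free_quotient_basis (R : realFieldType) (n k : nat)
    (gens : seq 'rV[int]_n) (sigma : 'I_k -> 'rV[int]_n)
    (gamma : 'I_k -> 'rV[int]_n) : Prop :=
  (forall x, inS_F R gens sigma x ->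
     exists c : 'I_k -> nat, inU R gens sigma (x - comb gamma c)) /\
  (forall c c' : 'I_k -> nat,
     inU R gens sigma (comb gamma c - comb gamma c') -> c =1 c').

(* Main.v *)
Require Import Defs.
From HB Require Import structures.
From mathcomp Require Import all_boot all_order all_algebra.
Import Order.TTheory GRing.Theory Num.Theory.
Local Open Scope ring_scope.

Lemma mxMnE (m n : nat) (A : 'M[int]_(m,n)) (c : nat) i j :
  (A *+ c) i j = A i j *+ c.
Proof. elim: c => [|c IH]; by rewrite ?mulr0n ?mxE // !mulrS mxE IH. Qed.

Lemma lformR_emb (R : realFieldType) (n : nat) (s x : 'rV[int]_n) :
  lformR s (embR R x) = (lformZ s x)%:~R.
Proof.
rewrite /lformR /lformZ rmorph_sum; apply: eq_bigr => i _.
by rewrite /embR mxE rmorphM.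
Qed.

Lemma lformZD n (s x y : 'rV[int]_n) : lformZ s (x + y) = lformZ s x + lformZ s y.
Proof. rewrite /lformZ -big_split; apply: eq_bigr => i _; by rewrite mxE mulrDr. Qed.
Lemma lformZN n (s x : 'rV[int]_n) : lformZ s (- x) = - lformZ s x.
Proof. rewrite /lformZ -sumrN; apply: eq_bigr => i _; by rewrite mxE mulrN. Qed.
Lemma lformZ0 n (s : 'rV[int]_n) : lformZ s 0 = 0.
Proof. rewrite /lformZ big1 // => i _; by rewrite mxE mulr0. Qed.
Lemma lformZMn n (s x : 'rV[int]_n) c : lformZ s (x *+ c) = lformZ s x *+ c.
Proof. rewrite /lformZ -sumrMnl; apply: eq_bigr => i _; by rewrite mxMnE mulrnAr. Qed.

Lemma lformZ_comb n k (s : 'rV[int]_n) (gamma : 'I_k -> 'rV[int]_n) c :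
  lformZ s (comb gamma c) = \sum_(j < k) lformZ s (gamma j) *+ c j.
Proof.
rewrite /comb; elim/big_rec2: _ => [|j y1 y2 _ IH]; first by rewrite lformZ0.
by rewrite lformZD lformZMn IH.
Qed.

Lemma comb_sig n k (sigma gamma : 'I_k -> 'rV[int]_n) c i :
  (forall i j, lformZ (sigma i) (gamma j) = (i == j)%:Z) ->
  lformZ (sigma i) (comb gamma c) = (c i)%:Z.
Proof.
move=> Hd; rewrite lformZ_comb (bigD1 i) //= Hd eqxx big1 ?addr0.
  exact: natz.
by move=> j /negbTE Hj; rewrite Hd eq_sym Hj mul0rn.
Qed.

Theorem mainTheorem5 (R : realFieldType) (n : nat) (gens : seq 'rV[int]_n)
    (k : nat) (sigma gamma : 'I_k -> 'rV[int]_n) :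
  affine gens ->
  (forall i, facet_form R gens (sigma i)) ->
  (forall j, inS gens (gamma j)) ->
  (forall i j, lformZ (sigma i) (gamma j) = (i == j)%:Z) ->
  (forall x, inGrp (inSF R gens sigma) x <->
             (inGrp (inS gens) x /\ forall i, lformZ (sigma i) x = 0)) ->
  free_quotient_basis R gens sigma gamma.
Proof.
move=> Haff Hfac Hg Hd H5; split.
- move=> x [a [b [Ha [[Hb [_ Hbf]] ->]]]].
  have Hpos : forall i, 0 <= lformZ (sigma i) a.
    move=> i; case: (Hfac i) => _ Hp _.
    have := Hp (embR R a); rewrite lformR_emb ler0z; apply.
    case: Ha => c ->; exists (fun i => (c i)%:R); split.
      by move=> j; rewrite ler0n.
    apply/matrixP => r s; rewrite /embR mxE !summxE rmorph_sum; apply: eq_bigr => j _.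
    by rewrite !mxE mxMnE rmorphMn mulr_natl.
  have Hb0 : forall i, lformZ (sigma i) b = 0.
    by move=> i; apply/eqP; rewrite -(intr_eq0 R) -lformR_emb Hbf.
  exists (fun i => `|lformZ (sigma i) a|%N).
  apply/H5; split; first exact: Haff.
  move=> i; rewrite lformZD lformZN comb_sig // lformZD lformZN Hb0.
  by rewrite abszE ger0_norm // subr0 subrr.
- move=> c c' /H5 [_ H] i.
  have := H i; rewrite lformZD lformZN !comb_sig // => /eqP.
  by rewrite subr_eq0 eqz_nat => /eqP.
Qed.
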